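(* Let $p$ be an odd prime, $s\ge1$, and $r\ge3$ an integer dividing $\frac{p^s\pm1}2$ (for a fixed choice of sign $\pm$). Let $\lambda=e^{2\pi i/(2r)}$ and $\eta=-\frac{(\lambda-\lambda^{-1})}{\sqrt{2r}}\,i$ with $\sqrt{2r}>0$. Then $$\eta^{p^s}\equiv\mp\left(\frac{-2r}{p}\right)^{s}\eta\pmod p,$$ where the sign $\mp$ is opposite to the sign $\pm$ in the hypothesis.
   Context: $\left(\frac{-2r}{p}\right)$ is the Legendre symbol. The congruence means the difference is $p$ times an element of the ring of algebraic integers with $2r$ inverted. *)

(* Defs.v *)
From mathcomp Require Import all_boot all_order all_algebra all_field.
Set Implicit Arguments. Unset Strict Implicit. Unset Printing Implicit Defensive.
Import Order.TTheory GRing.Theory Num.Theory.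
Local Open Scope ring_scope.

Definition legendre (a : int) (p : nat) : int :=
  if (p%:Z %| a)%Z then 0
  else if [exists x : 'I_p, (p%:Z %| (x%:Z) ^+ 2 - a)%Z] then 1 else -1.

(* The ring of algebraic integers with m inverted: Z_bar[1/m]. *)
Definition Aint_inv (m : nat) (x : algC) : Prop :=
  exists k : nat, (m%:R ^+ k * x) \in Aint.

Definition congr_mod_inv (m p : nat) (x y : algC) : Prop :=
  exists z, Aint_inv m z /\ x - y = p%:R * z.

(* Main.v *)
From mathcomp Require Import all_boot all_order all_algebra all_field.
From mathcomp Require Import zify ring.
Require Import Defs.
Import Order.TTheory GRing.Theory Num.Theory.
Local Open Scope ring_scope.

Section Fp.
Variable p : nat.
Hypothesis pP : prime p.
Hypothesis po : odd p.

Let pF := pchar_Fp pP.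

Lemma fermat (x : 'F_p) : x ^+ p = x.
Proof. by have := expf_card x; rewrite card_Fp. Qed.

Lemma fermat1 (x : 'F_p) : x != 0 -> x ^+ p.-1 = 1.
Proof.
move=> x0; have p0 := prime_gt0 pP.
apply: (mulfI x0); rewrite mulr1 -exprS prednK //; exact: fermat.
Qed.

Lemma natFp_inj i j : (i < p)%N -> (j < p)%N -> (i%:R : 'F_p) = j%:R -> i = j.
Proof.
wlog le : i j / (i <= j)%N.
  move=> W ip jp E; case/orP: (leq_total i j) => h; first exact: W.
  by apply/esym/W=> //; apply/esym.
move=> ip jp E; have: (p %| j - i)%N by rewrite (dvdn_pcharf pF) natrB // E subrr.
case/dvdnP=> [[|k]] Hk; rewrite ?mulSn in Hk; lia.
Qed.

Lemma natFp_neq0 i : (0 < i < p)%N -> (i%:R : 'F_p) != 0.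
Proof.
move=> /andP[i0 ip]; rewrite -(dvdn_pcharf pF); apply/negP => /dvdn_leq.
by move=> /(_ i0); rewrite leqNgt ip.
Qed.

Lemma euler (a : int) : ~~ (p%:Z %| a)%Z ->
  (a%:~R : 'F_p) ^+ (p.-1./2) = (legendre a p)%:~R.
Proof.
move=> pna; set h := p.-1./2.
have p3 : (2 < p)%N.
  rewrite ltn_neqAle (prime_gt1 pP) andbT; by apply: (contraTneq _ po) => <-.
have h2 : h.*2 = p.-1 by rewrite /h even_halfK // -oddS prednK ?prime_gt0.
have a0 : (a%:~R : 'F_p) != 0 by rewrite -(dvdz_pcharf pF).
have ah2 : ((a%:~R : 'F_p) ^+ h) ^+ 2 = 1 by rewrite -exprM muln2 h2 fermat1.
rewrite /legendre (negPf pna); case: ifP.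
  case/existsP=> x; rewrite (dvdz_pcharf pF) rmorphB rmorphXn /= subr_eq0 => /eqP E.
  rewrite -E -exprM mul2n h2 fermat1 //; apply: contra a0 => /eqP x0.
  by rewrite -E /= x0 expr0n.
move/negbT/negP=> nex.
have := ah2; move/eqP; rewrite sqrf_eq1 => /orP[/eqP ah1|/eqP -> //].
exfalso.
pose rs := (a%:~R : 'F_p) :: [seq ((i.+1)%:R : 'F_p) ^+ 2 | i <- iota 0 h].
have h0 : (0 < h)%N by lia.
have := @max_poly_roots _ ('X^h - 1) rs.
rewrite size_XnsubC // /= size_map size_iota ltnn => H; suff: false by []; apply: H.
- by rewrite -size_poly_eq0 size_XnsubC.
- rewrite /= /root !hornerE ah1 subrr eqxx /=.
  apply/allP=> y /mapP[i]; rewrite mem_iota add0n => ih ->.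
  rewrite !hornerE -exprM mul2n h2 fermat1 ?subrr // natFp_neq0 //; lia.
- rewrite /= map_inj_in_uniq ?iota_uniq ?andbT.
    apply/negP=> /mapP [i]; rewrite mem_iota add0n => ih E.
    have ip : (i.+1 < p)%N by lia.
    apply: nex; apply/existsP; exists (Ordinal ip).
    by rewrite (dvdz_pcharf pF) rmorphB rmorphXn /= -E subrr.
  move=> i j; rewrite !mem_iota !add0n => ih jh /eqP.
  rewrite -subr_eq0 subr_sqr mulf_eq0 subr_eq0 => /orP[/eqP E|].
    have : i.+1 = j.+1 by apply: (@natFp_inj i.+1 j.+1 _ _ E); lia.
    by case.
  by rewrite -natrD (negPf (natFp_neq0 _ _)) //; lia.
Qed.

Lemma fermat_pow (x : 'F_p) s : x ^+ (p ^ s) = x.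
Proof. by elim: s => [|s IH]; rewrite ?expr1 // expnSr exprM IH fermat. Qed.

Lemma fermat_pow1 (x : 'F_p) s : x != 0 -> x ^+ (p ^ s).-1 = 1.
Proof.
move=> x0; apply: (mulfI x0); rewrite mulr1 -exprS prednK ?expn_gt0 ?prime_gt0 //.
exact: fermat_pow.
Qed.

Lemma half_step s : ((p ^ s.+1).-1./2 = p * (p ^ s).-1./2 + p.-1./2)%N.
Proof.
have [u Hu] : exists u, (p ^ s = u.*2.+1)%N.
  by exists (p ^ s)./2; rewrite -[LHS]odd_double_half oddX po orbT.
have [v Hv] : exists v, (p = v.*2.+1)%N.
  by exists p./2; rewrite -[LHS]odd_double_half po.
rewrite expnS Hu Hv.
rewrite (_ : ((v.*2.+1 * u.*2.+1).-1 = (v.*2.+1 * u + v).*2)%N); last first.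
  rewrite -!muln2 /=; nia.
by rewrite doubleK /= !doubleK.
Qed.

Lemma euler_pow (x : 'F_p) s : x ^+ ((p ^ s).-1./2) = (x ^+ p.-1./2) ^+ s.
Proof.
elim: s => [|s IH]; first by rewrite expn0 expr0.
by rewrite half_step exprD mulnC exprM fermat IH exprSr.
Qed.

End Fp.

Lemma key_int p s m : prime p -> odd p -> ~~ (p %| m)%N ->
  (p%:Z %| (- (m%:Z)) ^+ ((p ^ s).-1./2)
           - (legendre (- (m%:Z)) p) ^+ s * (m%:Z) ^+ (p ^ s).-1)%Z.
Proof.
move=> pP po pm; have pF := pchar_Fp pP.
have pm' : ~~ (p%:Z %| m%:Z)%Z by [].
have m0 : ((m%:Z)%:~R : 'F_p) != 0 by rewrite -(dvdz_pcharf pF).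
rewrite (dvdz_pcharf pF) rmorphB rmorphM !rmorphXn /=.
rewrite euler_pow // euler; last by rewrite dvdzE abszN. apply/eqP; set L := (_ ^+ s); rewrite -[RHS](subrr L); congr (_ - _); rewrite -[RHS]mulr1; congr (_ * _); exact: (fermat_pow1 _ pP _ _ m0).
all: by []. Qed.

Lemma dvd_bin_pexp p s i : prime p -> (0 < i < p ^ s)%N -> (p %| 'C(p ^ s, i))%N.
Proof.
move=> pP /andP[i0 ilt]; apply/negPn/negP => ndC.
have cop : coprime (p ^ s) 'C(p ^ s, i) by rewrite coprimeXl // prime_coprime.
have : (p ^ s %| 'C(p ^ s, i) * i)%N.
  case: i i0 ilt {ndC cop} => [|j] // _ _.
  by rewrite mulnC -mul_bin_diag dvdn_mulr.
rewrite Gauss_dvdr // => /(dvdn_leq i0); rewrite leqNgt ilt.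
done.
Qed.

Lemma frob p s (x y : algC) : prime p -> x \in Aint -> y \in Aint ->
  exists2 z, z \in Aint & (x + y) ^+ (p ^ s) = x ^+ (p ^ s) + y ^+ (p ^ s) + p%:R * z.
Proof.
move=> pP xA yA.
have [n HN] : exists n, (p ^ s = n.+1)%N.
  by exists (p ^ s).-1; rewrite prednK // expn_gt0 prime_gt0.
exists (\sum_(i < n) (x ^+ (p ^ s - i.+1) * y ^+ i.+1) *+ ('C(p ^ s, i.+1) %/ p)).
  by apply: rpred_sum => i _; rewrite rpredMn // rpredM // rpredX.
rewrite exprDn HN big_ord_recl big_ord_recr /=.
rewrite subn0 expr0 mulr1 bin0 subnn expr0 mul1r binn !mulr1n.
have dv i : (i < n)%N -> (p %| 'C(n.+1, i.+1))%N.
  by move=> ilt; rewrite -HN dvd_bin_pexp // HN ltnS.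
rewrite /bump /= !add1n mulr_sumr addrA [RHS]addrAC; congr (_ + _ + _).
apply: eq_bigr => i _; rewrite mulr_natl -mulrnA divnK //; exact: dv.
Qed.

Section AI.
Variable m : nat.
Local Notation AI := (Aint_inv m).

Lemma AI_A x : x \in Aint -> AI x.
Proof. by move=> xA; exists 0%N; rewrite expr0 mul1r. Qed.

Lemma AI_M x y : AI x -> AI y -> AI (x * y).
Proof.
move=> [k xk] [j yj]; exists (k + j)%N.
by rewrite exprD mulrACA rpredM.
Qed.

Lemma AI_D x y : AI x -> AI y -> AI (x + y).
Proof.
move=> [k xk] [j yj]; exists (k + j)%N.
have mA n : (m%:R : algC) ^+ n \in Aint by rewrite rpredX // Aint_Cnat.
rewrite mulrDr exprD rpredD //.
  by rewrite mulrAC rpredM.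
by rewrite -mulrA rpredM.
Qed.

Lemma AI_N x : AI x -> AI (- x).
Proof. by move=> [k xk]; exists k; rewrite mulrN rpredN. Qed.

Lemma AI_X x n : AI x -> AI (x ^+ n).
Proof.
move=> xA; elim: n => [|n IH]; first by rewrite expr0; apply: AI_A; exact: Aint1.
by rewrite exprS; apply: AI_M.
Qed.

Lemma AI_V : (0 < m)%N -> AI (m%:R^-1).
Proof.
by move=> m0; exists 1%N; rewrite expr1 mulfV ?pnatr_eq0 -?lt0n // Aint1.
Qed.

Lemma AI_int (k : int) : AI k%:~R.
Proof. by apply: AI_A; exact: Aint_int. Qed.
End AI.

Lemma alg_id (R : comRingType) (eps mu c0 z X Y W L k P : R) :
  Y * W = 1 -> X - L * Y = k * P ->
  (eps * mu + P * z) * (c0 * (X * W)) - eps * L * (mu * c0)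
    = P * (eps * mu * c0 * W * k + z * (c0 * (X * W))).
Proof.
move=> h1 h2; have hX : X = k * P + L * Y by rewrite -h2 subrK.
apply/eqP; rewrite -subr_eq0.
have -> : (eps * mu + P * z) * (c0 * (X * W)) - eps * L * (mu * c0)
    - P * (eps * mu * c0 * W * k + z * (c0 * (X * W)))
    = eps * L * mu * c0 * (Y * W - 1) by rewrite hX; ring.
by rewrite h1 subrr mulr0.
Qed.

Theorem lemma7 (p s r : nat) (plus : bool) :
  prime p -> odd p -> (1 <= s)%N -> (3 <= r)%N ->
  (r %| (if plus then (p ^ s).+1 else (p ^ s).-1)./2)%N ->
  let lambda : algC := r.-root (-1) in
  let eta : algC := - ((lambda - lambda^-1) / sqrtC (2 * r)%:R) * 'i in
  congr_mod_inv (2 * r) p (eta ^+ (p ^ s))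
    ((if plus then -1 else 1) * (legendre (- (2 * r)%:Z) p)%:~R ^+ s * eta).
Proof.
move=> pP po s1 r3 hdiv lambda eta.
set m := (2 * r)%N in eta *.
set N := (p ^ s)%N in hdiv *.
set M : algC := m%:R in eta *.
have r0 : (0 < r)%N by lia.
have m0 : (0 < m)%N by rewrite /m; lia.
have M0 : M != 0 by rewrite pnatr_eq0 -lt0n.
have p3 : (2 < p)%N.
  rewrite ltn_neqAle (prime_gt1 pP) andbT; by apply: (contraTneq _ po) => <-.
have N0 : (0 < N)%N by rewrite expn_gt0 prime_gt0.
have No : odd N by rewrite oddX po orbT.
have lr : lambda ^+ r = -1 by rewrite /lambda rootCK.
have l2 : lambda ^+ m = 1 by rewrite /m mulnC exprM lr sqrrN expr1n.
have l0 : lambda != 0.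
  apply/eqP=> l00; move: l2; rewrite l00 expr0n eqn0Ngt m0 /= => /eqP.
  by rewrite eq_sym oner_eq0.
have lA : lambda \in Aint by apply: (Aint_unity_root m0); rewrite unity_rootE l2.
have linv : lambda^-1 = lambda ^+ m.-1.
  by apply: (mulfI l0); rewrite mulfV // -exprS prednK.
have liA : lambda^-1 \in Aint by rewrite linv rpredX.
have iA : 'i \in Aint.
  apply: (@Aint_unity_root 4) => //.
  by rewrite unity_rootE (exprM _ 2 2) sqrCi sqrrN expr1n.
set q := sqrtC M in eta *.
have q2 : q ^+ 2 = M by rewrite sqrtCK.
have q0 : q != 0.
  by apply/eqP=> q00; move: q2; rewrite q00 expr0n /= => /eqP; rewrite eq_sym (negPf M0).
have qA : q \in Aint.
  apply: (@root_monic_Aint ('X^2 - M%:P)).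
  - by rewrite /root !hornerE q2 subrr.
  - exact: monicXnsubC.
  - by rewrite polyOverXnsubC rpred_nat.
set mu := lambda - lambda^-1.
set c0 := - (q^-1 * 'i).
have etaE : eta = mu * c0 by rewrite /eta mulrN mulNr mulrA.
have lpow k : (m %| k)%N -> lambda ^+ k = 1.
  by case/dvdnP=> t ->; rewrite mulnC exprM l2 expr1n.
have mdiv2 x : ~~ odd x -> (r %| x./2)%N -> (m %| x)%N.
  by move=> ex rx; rewrite -(even_halfK ex) -mul2n /m dvdn_pmul2l.
have lN : lambda ^+ N = if plus then lambda^-1 else lambda.
  move: hdiv; case: (plus) => /mdiv2 hd.
    have := lpow _ (hd _); rewrite /= No => /(_ isT); rewrite exprSr => E.
    by apply: (mulIf l0); rewrite E mulVf.
  have := lpow _ (hd _); rewrite -oddS prednK // No => /(_ isT) E.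
  by rewrite -(prednK N0) exprSr E mul1r.
set eps : algC := if plus then -1 else 1.
have liA' : - lambda^-1 \in Aint by rewrite rpredN.
have [z zA Hz] := frob p s _ _ pP lA liA'.
have Hmu : mu ^+ N = eps * mu + p%:R * z.
  rewrite Hz exprNn -signr_odd No expr1 mulN1r exprVn lN /eps /mu.
  by case: (plus); rewrite ?invrK; ring.
set e := N.-1./2.
have e2 : e.*2 = N.-1 by rewrite /e even_halfK // -oddS prednK.
set X := (- M) ^+ e.
set W := (M^-1) ^+ N.-1.
set Y := M ^+ N.-1.
have YW : Y * W = 1 by rewrite -exprMn mulfV // expr1n.
have c2 : c0 ^+ 2 = - M^-1 by rewrite sqrrN exprMn sqrCi exprVn q2 mulrN1.
have cN : c0 ^+ N = c0 * (X * W).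
  rewrite -(prednK N0) exprS -e2 -mul2n exprM c2 /X /W -e2 -mul2n exprM -exprMn.
  congr (_ * (_ ^+ _)); rewrite expr2 mulrA mulNr mulfV // mulN1r.
  done.
have pm : ~~ (p %| m)%N.
  rewrite /m Euclid_dvdM // negb_or; apply/andP; split.
    by apply/negP => /(dvdn_leq (isT : (0 < 2)%N)); rewrite leqNgt p3.
  apply/negP => pr; move: hdiv => /(dvdn_trans pr).
  have pN : (p %| N)%N by rewrite dvdn_exp.
  case: (plus) => hh.
    have : (p %| N.+1)%N.
      apply: (dvdn_trans hh); rewrite -{2}(even_halfK (n := N.+1)).
        by rewrite -mul2n dvdn_mull.
      by rewrite /= No.
    by rewrite -addn1 (dvdn_addr _ pN) dvdn1 => /eqP p1; move: p3; rewrite p1.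
  have : (p %| N.-1)%N.
    apply: (dvdn_trans hh); rewrite -{2}(even_halfK (n := N.-1)).
      by rewrite -mul2n dvdn_mull.
    by rewrite -oddS prednK // No.
  move=> h1; have : (p %| N.-1 + 1)%N by rewrite addn1 prednK.
  by rewrite (dvdn_addr _ h1) dvdn1 => /eqP p1; move: p3; rewrite p1.
have HA := key_int p s m pP po pm.
case/dvdzP: HA => k Hk.
set L : algC := (legendre (- (m%:Z)) p)%:~R.
have E3 : X - L ^+ s * Y = k%:~R * p%:R.
  have := congr1 (fun t : int => (t%:~R : algC)) Hk.
  by rewrite /= rmorphB rmorphM !rmorphXn rmorphN /= rmorphM.
have qi : q^-1 = q * M^-1 by rewrite -q2 expr2 invfM mulrA mulfV // mul1r.
exists (eps * mu * c0 * W * k%:~R + z * (c0 * (X * W))); split.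
  have epsA : Aint_inv m eps by rewrite /eps; case: (plus); apply: AI_int (-1) || apply: AI_int 1.
  have muA : Aint_inv m mu by apply: AI_A; rewrite rpredB.
  have MiA : Aint_inv m M^-1 by apply: AI_V.
  have c0A : Aint_inv m c0.
    by apply: AI_N; apply: AI_M; [rewrite qi; apply: AI_M => //; exact: AI_A | exact: AI_A].
  have WA : Aint_inv m W by apply: AI_X.
  have XA : Aint_inv m X by apply: AI_X; apply: AI_N; apply: AI_A; exact: rpred_nat.
  apply: AI_D.
    apply: AI_M; last exact: AI_int.
    by apply: AI_M => //; apply: AI_M => //; apply: AI_M.
  apply: AI_M; first exact: AI_A.
  by apply: AI_M => //; apply: AI_M.
rewrite etaE exprMn Hmu cN -/eps.
exact: (@alg_id _ _ _ _ _ _ _ _ _ _ _ YW E3).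
Qed.
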